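(* If $G$ is a finite group, then there is a closed subgroup $H_0$ of $G^\omega$ such that for every closed subgroup $H$ of $G^\omega$ there is a continuous group homomorphism $\varphi:G^\omega\to G^\omega$ with $\varphi^{-1}(H_0)=H$.
   Context: $G$ carries the discrete topology and $G^\omega$ the product topology. *)

(* Defs.v *)
From HB Require Import structures.
From mathcomp Require Import all_boot all_order all_algebra all_fingroup.
From mathcomp Require Import all_classical all_reals.
From mathcomp Require Import topology_structure discrete_topology function_spaces.

Set Implicit Arguments.
Unset Strict Implicit.
Unset Printing Implicit Defensive.

Local Open Scope classical_set_scope.

Definition Gomega (gT : finGroupType) : Type :=
  {ptws nat -> discrete_topology gT}.

Definition gw_one (gT : finGroupType) : Gomega gT := fun _ => (1 : gT)%g.
Definition gw_mul (gT : finGroupType) (x y : Gomega gT) : Gomega gT :=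
  fun n => ((x n : gT) * (y n : gT))%g.
Definition gw_inv (gT : finGroupType) (x : Gomega gT) : Gomega gT :=
  fun n => ((x n : gT)^-1)%g.

Definition is_subgroup_omega (gT : finGroupType) (H : set (Gomega gT)) : Prop :=
  [/\ H (gw_one gT),
      (forall x y, H x -> H y -> H (gw_mul x y)) &
      (forall x, H x -> H (gw_inv x))].

Definition closed_subgroup_omega (gT : finGroupType) (H : set (Gomega gT)) : Prop :=
  is_subgroup_omega H /\ closed H.

Definition group_hom_omega (gT : finGroupType) (phi : Gomega gT -> Gomega gT) : Prop :=
  forall x y, phi (gw_mul x y) = gw_mul (phi x) (phi y).

(* Main.v *)
Require Import Defs.
From mathcomp Require Import all_boot all_order all_algebra all_fingroup.
From mathcomp Require Import all_classical all_reals.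
From mathcomp Require Import topology_structure uniform_structure discrete_topology function_spaces.
Local Open Scope classical_set_scope.

Set Implicit Arguments.
Unset Strict Implicit.
Section T.
Variable gT : finGroupType.

Definition cylf (y : Gomega gT) (f : nat -> nat) (k : nat) : set (Gomega gT) :=
  [set z | forall i, (i < k)%N -> z (f i) = y (f i)].

Lemma coord_nbhs (y : Gomega gT) (j : nat) : nbhs y [set z : Gomega gT | z j = y j].
Proof.
have := @proj_continuous nat (fun _ => discrete_topology gT) j y.
move=> h; exact: (h [set y j] (discrete_set1 _)).
Qed.

Lemma cylf_nbhs y f k : nbhs y (cylf y f k).
Proof.
elim: k => [|k IH].
  by apply: filterS filterT => z _ i.
apply: filterS (filterI IH (coord_nbhs y (f k))) => z [h1 h2] i.
rewrite ltnS leq_eqVlt => /orP[/eqP -> //|]; exact: h1.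
Qed.

Lemma nbhs_cyl (y : Gomega gT) (B : set (Gomega gT)) :
  nbhs y B -> exists k, cylf y id k `<=` B.
Proof.
pose F := filter_from setT (cylf y id).
have FF : Filter F.
  apply: filter_fromT_filter; first by exists 0%N.
  move=> i j; exists (maxn i j) => z hz; split => l hl; apply: hz;
    apply: leq_trans hl _; by rewrite ?leq_maxl ?leq_maxr.
have : {ptws, F --> y}.
  have := (proj2 (@pointwise_cvgP (discrete_topology nat) (discrete_topology gT : uniformType) F y FF)).
  apply => t.
  apply/discrete_cvg; exists t.+1 => // z hz; exact: hz.
move=> /(_ B) h /h [k _ hk]; by exists k.
Qed.

Local Open Scope group_scope.

Definition fT n := {ffun 'I_n -> gT}.

Definition sgrp n (L : {set fT n}) : Prop :=
  [/\ [ffun=> 1] \in L,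
      (forall f g, f \in L -> g \in L -> [ffun i => f i * g i] \in L) &
      (forall f, f \in L -> [ffun i => (f i)^-1] \in L)].

Definition code n (L : {set fT n}) (i : nat) : nat := pickle (n, (pickle L, i)).

Definition restr n (y : Gomega gT) (c : nat -> nat) : fT n :=
  [ffun i : 'I_n => (y (c i) : gT)].

Definition H0 : set (Gomega gT) :=
  fun y => forall n (L : {set fT n}), sgrp L -> restr n y (code L) \in L.

Definition Hs (H : set (Gomega gT)) n : {set fT n} :=
  [set f | `[< exists2 x, H x & f = restr n x id >]].

Definition phi (H : set (Gomega gT)) (x : Gomega gT) : Gomega gT :=
  fun k => match unpickle k with
  | Some (n, (l, i)) => if (i < n)%N && (l == pickle (Hs H n)) then x i else (1 : gT)
  | None => (1 : gT)
  end.

Lemma phi_code H x n (L : {set fT n}) (i : 'I_n) :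
  phi H x (code L i) = if L == Hs H n then x i else (1 : gT).
Proof.
rewrite /phi /code pickleK ltn_ord /=.
by rewrite (inj_eq (@pcan_inj _ _ _ _ (@pickleK _))).
Qed.

Lemma H0_sub : is_subgroup_omega H0.
Proof.
split.
- move=> n L [h1 _ _]; congr (_ \in L): h1; by apply/ffunP => i; rewrite !ffunE.
- move=> x y hx hy n L hL; have [_ hm _] := hL.
  have := hm _ _ (hx n L hL) (hy n L hL); congr (_ \in L).
  by apply/ffunP => i; rewrite !ffunE.
- move=> x hx n L hL; have [_ _ hi] := hL.
  have := hi _ (hx n L hL); congr (_ \in L).
  by apply/ffunP => i; rewrite !ffunE.
Qed.

Lemma H0_closed : closed H0.
Proof.
move=> y hy n L hL.
have := hy _ (cylf_nbhs y (code L) n).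
case=> z [hz hzy].
have := hz n L hL; congr (_ \in L).
by apply/ffunP => i; rewrite !ffunE hzy.
Qed.

Lemma Hs_sgrp H n : is_subgroup_omega H -> sgrp (Hs H n).
Proof.
case=> h1 hm hi; split.
- rewrite !inE; exists (gw_one gT) => //.
- move=> f g; rewrite !inE => -[x hx ->] [x' hx' ->].
  exists (gw_mul x x'); first exact: hm.
  by apply/ffunP => i; rewrite !ffunE.
- move=> f; rewrite !inE => -[x hx ->].
  exists (gw_inv x); first exact: hi.
  by apply/ffunP => i; rewrite !ffunE.
Qed.

Lemma phi_hom H : group_hom_omega (phi H).
Proof.
move=> x y; apply: funext => k; rewrite /phi /gw_mul.
case: (unpickle k) => [[n [l i]]|]; last by rewrite mulg1.
by case: ifP; rewrite ?mulg1.
Qed.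

Lemma phi_cont H : continuous (phi H).
Proof.
move=> x.
have FF : Filter (fmap (phi H) (nbhs x)). apply: (@fmap_filter _ _ (phi H) (nbhs x)); exact: (@nbhs_filter (Gomega gT)).
apply: (proj2 (@pointwise_cvgP (discrete_topology nat) (discrete_topology gT : uniformType) _ (phi H x) FF)) => t.
apply/discrete_cvg.
suff: nbhs x [set z : Gomega gT | phi H z t = phi H x t] by [].
rewrite /phi /=.
case: (unpickle t) => [[n [l i]]|]; last by apply: filterS filterT.
case: ifP => _; last by apply: filterS filterT.
exact: coord_nbhs.
Qed.

Lemma phi_pre H : closed_subgroup_omega H -> phi H @^-1` H0 = H.
Proof.
case=> hsub hcl; apply/seteqP; split => x /=.
- move=> hx; apply: hcl => B /nbhs_cyl [n hn].
  have := hx n (Hs H n) (Hs_sgrp n hsub).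
  have -> : restr n (phi H x) (code (Hs H n)) = restr n x id.
    by apply/ffunP => i; rewrite !ffunE phi_code eqxx.
  rewrite inE => /asboolP [x' hx' e]; exists x'; split => //.
  apply: hn => i /= hi.
  have := congr1 (fun f : fT n => f (Ordinal hi)) e; rewrite !ffunE /= => ->.
  done.
- move=> hx n L hL.
  have [->|ne] := eqVneq L (Hs H n).
    have -> : restr n (phi H x) (code (Hs H n)) = restr n x id.
      by apply/ffunP => i; rewrite !ffunE phi_code eqxx.
    by rewrite inE; apply/asboolP; exists x.
  have [h1 _ _] := hL.
  congr (_ \in L): h1; apply/ffunP => i; rewrite !ffunE phi_code.
  by rewrite (negbTE ne).
Qed.

End T.

Unset Implicit Arguments.
Set Strict Implicit.
Theorem mainTheorem18 (gT : finGroupType) :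
  exists H0 : set (Gomega gT),
    closed_subgroup_omega H0 /\
    forall H : set (Gomega gT), closed_subgroup_omega H ->
      exists phi : Gomega gT -> Gomega gT,
        [/\ group_hom_omega phi, continuous phi & phi @^-1` H0 = H].
Proof.
exists (@H0 gT); split; first by split; [exact: H0_sub | exact: H0_closed].
move=> H hH; exists (phi H); split; [exact: phi_hom | exact: phi_cont | exact: phi_pre].
Qed.
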